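(* There is a function $C_2(t,\epsilon)$ such that the following holds for every positive integer $t$ and every $\epsilon\in(0,1)$: let $G$ be a bipartite graph with $\delta(G)\geq C_2(t,\epsilon)$ which is induced $S_{t,t}$-free. Then for every edge $ab$ of $G$ we have $|S_{N(a)}^{N(b)}(\epsilon)|\leq C_2(t,\epsilon)$.
   Context: For positive integers $a,b$, the biclaw $S_{a,b}$ is the graph with vertex set $\{x,x_1,\dots,x_a,y,y_1,\dots,y_b\}$ and edges $xy$, $xy_1,\dots,xy_b$, $yx_1,\dots,yx_a$. Induced $S_{t,t}$-free means no induced subgraph isomorphic to $S_{t,t}$. $N(v)$ is the neighbourhood of $v$, $\delta(G)$ the minimum degree. For vertex sets $X,Y$ and $\epsilon\in(0,1)$, $S_X^Y(\epsilon)=\{x\in X : |N(x)\cap Y|\leq (1-\epsilon)|Y|\}$. *)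

(* Defs.v *)
From HB Require Import structures.
From mathcomp Require Import all_boot all_order all_algebra.
From mathcomp Require Import reals.
Set Implicit Arguments. Unset Strict Implicit. Unset Printing Implicit Defensive.
Import Order.TTheory GRing.Theory Num.Theory.
Local Open Scope ring_scope.

(* A finite simple graph: vertex type T : finType, adjacency e : rel T,
   assumed symmetric and irreflexive (hypotheses in the theorem). *)

Definition nbhd (T : finType) (e : rel T) (v : T) : {set T} := [set w | e v w].

Definition bipartite (T : finType) (e : rel T) : Prop :=
  exists c : T -> bool, forall u v, e u v -> c u != c v.

(* Vertices of the biclaw S_{a,b}:
   inl true = x, inl false = y, inr (inl i) = x_i, inr (inr j) = y_j. *)
Definition biclaw_vert (a b : nat) : finType := (bool + ('I_a + 'I_b))%type.

Definition biclaw_adj (a b : nat) : rel (biclaw_vert a b) :=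
  fun u v =>
    match u, v with
    | inl true, inl false | inl false, inl true => true
    | inl true, inr (inr _) | inr (inr _), inl true => true
    | inl false, inr (inl _) | inr (inl _), inl false => true
    | _, _ => false
    end.

Arguments biclaw_adj : clear implicits.

Definition induced_copy (V T : finType) (h : rel V) (e : rel T) : Prop :=
  exists f : V -> T, injective f /\ forall u v, e (f u) (f v) = h u v.

Definition induced_free (V T : finType) (h : rel V) (e : rel T) : Prop :=
  ~ induced_copy h e.

Definition Sset (R : realType) (T : finType) (e : rel T) (X Y : {set T}) (eps : R)
  : {set T} :=
  [set x in X | (#|nbhd e x :&: Y|%:R <= (1 - eps) * #|Y|%:R)%R].

(* Main.v *)
Require Import Defs.
From HB Require Import structures.
From mathcomp Require Import all_boot all_order all_algebra.
From mathcomp Require Import reals ring lra.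
Import Order.TTheory GRing.Theory Num.Theory.
Local Open Scope ring_scope.

Lemma card_sum_ind (U : finType) (B : {set U}) (P : pred U) :
  (\sum_(z in B) (P z : nat) = #|[set z in B | P z]|)%N.
Proof.
by rewrite -sum1dep_card big_mkcondr; apply: eq_bigr => z _; case: (P z).
Qed.

Section Core.
Variables (R : realType) (T : finType) (e : rel T) (Y : {set T}).
Definition Mset s := Y :\: nbhd e s.

Lemma step (S D : {set T}) (r : R) : S != set0 -> 0 < r ->
  (forall s, s \in S -> r <= #|Mset s :\: D|%:R) ->
  exists2 y, y \in Y :\: D &
    #|S|%:R * r <= #|Y|%:R * #|[set s in S | y \in Mset s]|%:R.
Proof.
move=> /set0Pn [s0 s0S] r0 Hr.
have : (0 < #|Mset s0 :\: D|)%N by rewrite -(ltr0n R); exact: lt_le_trans r0 (Hr _ s0S).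
case/card_gt0P => y0 y0in.
have y0YD : y0 \in Y :\: D.
  by move: y0in; rewrite /Mset !inE => /and3P [-> _ ->].
pose cnt y := #|[set s in S | y \in Mset s]|.
have [y yin ymax] := @arg_maxnP _ y0 (mem (Y :\: D)) cnt y0YD.
exists y => //.
have dc : (\sum_(s in S) #|Mset s :\: D| = \sum_(z in Y :\: D) cnt z)%N.
  have e1 : forall s, #|Mset s :\: D| = (\sum_(z in Y :\: D) (z \in Mset s : nat))%N.
    move=> s; rewrite card_sum_ind; apply: eq_card => z; rewrite /Mset !inE.
    by case: (z \in D); case: (z \in Y); case: (e s z).
  under eq_bigr => s _ do rewrite e1.
  rewrite exchange_big /=; apply: eq_bigr => z _.
  by rewrite /cnt card_sum_ind.
have le1 : (\sum_(z in Y :\: D) cnt z <= #|Y| * cnt y)%N.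
  apply: leq_trans (_ : \sum_(z in Y :\: D) cnt y <= _)%N.
    by apply: leq_sum => z zin; apply: ymax.
  rewrite sum_nat_const leq_mul2r; apply/orP; right.
  by apply: subset_leq_card; apply: subsetDl.
apply: le_trans (_ : (\sum_(s in S) #|Mset s :\: D|)%:R <= _).
  rewrite natr_sum -sum1_card natr_sum mulr_suml.
  by apply: ler_sum => s sS; rewrite mul1r; exact: Hr.
by rewrite -natrM ler_nat dc.
Qed.

Lemma iter_step (S : {set T}) (q : R) (t : nat) : 0 < q ->
  (forall s, s \in S -> q + t%:R <= #|Mset s|%:R) -> S != set0 ->
  forall k, (k <= t)%N -> exists (D S' : {set T}),
   [/\ D \subset Y, #|D| = k, S' \subset S,
       (forall s, s \in S' -> D \subset Mset s) &
       #|S|%:R * q ^+ k <= #|S'|%:R * #|Y|%:R ^+ k].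
Proof.
move=> q0 HS Sn0; elim=> [|k IH] hk.
  exists set0, S; split.
  - exact: sub0set.
  - by rewrite cards0.
  - exact: subxx.
  - by move=> s _; exact: sub0set.
  - by rewrite !expr0 !mulr1.
have [D [S' [DY cD S'S DM inv]]] := IH (ltnW hk).
have S0 : (0 < #|S|)%N by rewrite card_gt0.
have S'n0 : S' != set0.
  rewrite -card_gt0 -(ltr0n R); apply/negPn/negP; rewrite -leNgt => H0.
  have : 0 < #|S|%:R * q ^+ k by apply: mulr_gt0; rewrite ?ltr0n // exprn_gt0.
  have : #|S'|%:R * #|Y|%:R ^+ k <= 0 :> R.
    by apply: mulr_le0_ge0 => //; rewrite exprn_ge0.
  move: inv; lra.
have Hr : forall s, s \in S' -> q <= #|Mset s :\: D|%:R.
  move=> s sS'; have := HS s (subsetP S'S s sS').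
  rewrite cardsD (setIidPr (DM s sS')) cD => Hs.
  have hk' : (k <= #|Mset s|)%N.
    rewrite -(ler_nat R); apply: le_trans Hs.
    have : (k%:R <= t%:R :> R) by rewrite ler_nat ltnW.
    lra.
  rewrite natrB //.
  have : (k%:R <= t%:R :> R) by rewrite ler_nat ltnW.
  lra.
have [y yYD Hy] := @step S' D q S'n0 q0 Hr.
exists (y |: D), [set s in S' | y \in Mset s]; split.
- by rewrite subUset sub1set DY andbT; move: yYD; rewrite inE => /andP [].
- by rewrite cardsU1 cD; move: yYD; rewrite inE => /andP [-> _].
- by apply: subset_trans S'S; apply/subsetP => s; rewrite inE => /andP [].
- move=> s; rewrite inE => /andP [sS' yM].
  by rewrite subUset sub1set yM DM.
have Yk : 0 <= (#|Y|%:R : R) ^+ k by rewrite exprn_ge0.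
have H1 := ler_wpM2r (ltW q0) inv.
have H2 := ler_wpM2l Yk Hy.
rewrite exprSr mulrA; apply: le_trans H1 _.
move: H2; rewrite !exprSr.
move: (#|S'|%:R : R) (#|[set s in S' | y \in Mset s]|%:R : R) (#|Y|%:R : R) => a c b.
have -> : a * b ^+ k * q = b ^+ k * (a * q) by ring.
have -> : c * (b ^+ k * b) = b ^+ k * (b * c) by ring.
done.
Qed.
End Core.

Theorem mainTheorem5 (R : realType) :
  exists C2 : nat -> R -> R,
  forall (t : nat) (eps : R), (0 < t)%N -> 0 < eps < 1 ->
  forall (T : finType) (e : rel T),
    symmetric e -> irreflexive e ->
    bipartite e ->
    (forall v : T, C2 t eps <= #|nbhd e v|%:R) ->
    induced_free (biclaw_adj t t) e ->
    forall a b : T, e a b ->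
      #|Sset e (nbhd e a) (nbhd e b) eps|%:R <= C2 t eps.
Proof.
exists (fun t eps => t%:R * (2 / eps) ^+ t + 2 * t%:R / eps).
move=> t eps t0 /andP [e0 e1] T e esym eirr [c cH] deg Hfree a b eab.
set X := nbhd e a; set Y := nbhd e b; set S := Sset e X Y eps.
rewrite leNgt; apply/negP => HS.
have A0 : 0 <= t%:R * (2 / eps) ^+ t by rewrite mulr_ge0 // exprn_ge0 // divr_ge0 // ltW.
have B0 : 0 <= 2 * t%:R / eps.
  by rewrite divr_ge0 ?mulr_ge0 ?ltW // ltr0n.
have hY : 2 * t%:R / eps <= #|Y|%:R by move: (deg b); rewrite -/Y; lra.
have hS : t%:R * (2 / eps) ^+ t < #|S|%:R by move: HS; lra.
have tR : 1 <= t%:R :> R by rewrite ler1n.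
rewrite ler_pdivrMr // in hY.
set q := eps * #|Y|%:R - t%:R.
have q0 : 0 < q by rewrite /q; lra.
have Sn0 : S != set0.
  rewrite -card_gt0 -(ltr0n R); apply: le_lt_trans hS; exact: A0.
have HM : forall s, s \in S -> q + t%:R <= #|Mset T e Y s|%:R.
  move=> s; rewrite /S /Sset inE => /andP [_ Hs].
  have := cardsID (nbhd e s) Y; rewrite setIC -/(Mset T e Y s) => HC.
  have : (#|nbhd e s :&: Y| + #|Mset T e Y s|)%:R = #|Y|%:R :> R by rewrite HC.
  rewrite natrD /q; move: Hs; lra.
have [D [S' [DY cD S'S DM inv]]] := @iter_step R T e Y S q t q0 HM Sn0 t (leqnn t).
have Ypos : 0 < #|Y|%:R :> R.
  have : 0 < eps * #|Y|%:R by lra.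
  by rewrite pmulr_rgt0.
have ht : t%:R < #|S'|%:R :> R.
  have h1 : (eps / 2 * #|Y|%:R) ^+ t <= q ^+ t.
    rewrite ler_pXn2r // ?nnegrE; first by rewrite /q; lra.
      by apply: mulr_ge0; lra.
    lra.
  have h2 : #|S|%:R * (eps / 2) ^+ t <= #|S'|%:R.
    rewrite -(ler_pM2r (exprn_gt0 t Ypos)) -mulrA -exprMn.
    apply: le_trans inv; apply: ler_wpM2l => //.
  apply: lt_le_trans h2.
  have -> : t%:R = t%:R * (2 / eps) ^+ t * (eps / 2) ^+ t :> R.
    rewrite -mulrA -exprMn.
    have -> : 2 / eps * (eps / 2) = 1 :> R by field; lra.
    by rewrite expr1n mulr1.
  rewrite ltr_pM2r //; apply: exprn_gt0; lra.
have htn : (t <= #|S'|)%N by rewrite -(ler_nat R) ltW.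
have SX : forall s, s \in S -> s \in X by move=> s; rewrite /S /Sset inE => /andP [].
have S'X : forall s, s \in S' -> s \in X by move=> s /(subsetP S'S); apply: SX.
have DY' : forall d, d \in D -> d \in Y by move=> d /(subsetP DY).
have nSD : forall s d, s \in S' -> d \in D -> e s d = false.
  move=> s d sS dD; have := subsetP (DM s sS) d dD.
  by rewrite /Mset !inE => /andP [/negbTE].
have same : forall u v, c u = c v -> e u v = false.
  by move=> u v huv; apply/negP => /cH; rewrite huv eqxx.
have cab : c a != c b by apply: cH.
have cX : forall s, s \in X -> c s = c b.
  move=> s; rewrite /X /nbhd inE => /cH; move: cab.
  by case: (c a); case: (c b); case: (c s).
have cY : forall d, d \in Y -> c d = c a.
  move=> d; rewrite /Y /nbhd inE => /cH; move: cab.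
  by case: (c a); case: (c b); case: (c d).
pose As := enum S'; pose Ds := enum D.
have sAs : (t <= size As)%N by rewrite /As -cardE.
have sDs : size Ds = t by rewrite /Ds -cardE.
have As_in : forall i : 'I_t, nth b As i \in S'.
  by move=> i; rewrite -(mem_enum (mem S')) mem_nth // (leq_trans (ltn_ord i)).
have Ds_in : forall j : 'I_t, nth a Ds j \in D.
  by move=> j; rewrite -(mem_enum (mem D)) mem_nth // sDs.
pose f (v : biclaw_vert t t) : T :=
  match v with
  | inl true => b | inl false => a
  | inr (inl i) => nth b As i | inr (inr j) => nth a Ds j end.
have eba : e b a by rewrite esym.
have eaA : forall i : 'I_t, e a (nth b As i) by move=> i; have := S'X _ (As_in i); rewrite inE.
have eAa : forall i : 'I_t, e (nth b As i) a by move=> i; rewrite esym.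
have ebD : forall j : 'I_t, e b (nth a Ds j) by move=> j; have := DY' _ (Ds_in j); rewrite inE.
have eDb : forall j : 'I_t, e (nth a Ds j) b by move=> j; rewrite esym.
have nAD : forall i j : 'I_t, e (nth b As i) (nth a Ds j) = false by move=> i j; apply: nSD.
have nDA : forall i j : 'I_t, e (nth a Ds j) (nth b As i) = false by move=> i j; rewrite esym.
have cA : forall i : 'I_t, c (nth b As i) = c b by move=> i; apply: cX; apply: S'X.
have cDs : forall j : 'I_t, c (nth a Ds j) = c a by move=> j; apply: cY; apply: DY'.
apply: Hfree; exists f; split; last first.
  case=> [[]|[i|j]] [[]|[i'|j']] /=;
    rewrite ?eab ?eba ?eaA ?eAa ?ebD ?eDb ?nAD ?nDA //; apply: same; rewrite ?cA ?cDs //.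
have [d0 d0D] : exists d, d \in D.
  by apply/card_gt0P; rewrite cD.
have [s0 s0S] : exists s, s \in S'.
  by apply/card_gt0P; apply: leq_trans htn.
have bS : b \notin S'.
  by apply/negP => /nSD /(_ d0D); have := DY' _ d0D; rewrite /Y /nbhd inE => ->.
have aD : a \notin D.
  apply/negP => aD; have := nSD _ _ s0S aD; rewrite esym.
  by have := S'X _ s0S; rewrite /X /nbhd inE => ->.
move=> u v; case: u => [[]|[i|j]]; case: v => [[]|[i'|j']] //= H;
  try (by move/(congr1 c): H; rewrite ?cA ?cDs => H; move: cab; rewrite H eqxx).
- by move: bS; rewrite H As_in.
- by move: aD; rewrite H Ds_in.
- by move: bS; rewrite -H As_in.
- congr (inr (inl _)); apply: val_inj; apply/eqP.
  rewrite -(nth_uniq b (leq_trans (ltn_ord i) sAs) (leq_trans (ltn_ord i') sAs) (enum_uniq (mem S'))).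
  by rewrite H.
- by move: aD; rewrite -H Ds_in.
- congr (inr (inr _)); apply: val_inj; apply/eqP.
  rewrite -(nth_uniq a (_ : (j < size Ds)%N) (_ : (j' < size Ds)%N) (enum_uniq (mem D))) ?sDs //.
  by rewrite H.
Qed.
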